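(* Let $X$ be one of the Killing vector fields $\partial_x$, $\partial_\theta$, $x\partial_x+y\partial_y$, $\frac12(x^2-y^2)\partial_x+xy\partial_y$ of $\mathrm{SL}(2,\mathbb R)$. Then every $\mathcal A$-invariant $X$-translator is a surface of type $\Sigma_{x_0}$ or of type $\Sigma_{\theta_0}$ (depending on $X$).
   Context: $\mathrm{SL}(2,\mathbb R)$ is given global coordinates $(x,y,\theta)\in\mathbb R\times(0,\infty)\times\mathbb R$ via $(x,y,\theta)\mapsto \begin{pmatrix}1&x\\0&1\end{pmatrix}\begin{pmatrix}\sqrt y&0\\0&1/\sqrt y\end{pmatrix}\begin{pmatrix}\cos\theta&\sin\theta\\-\sin\theta&\cos\theta\end{pmatrix}$, with the metric $\langle\,,\rangle=\frac{dx^2+dy^2}{4y^2}+\left(d\theta+\frac{dx}{2y}\right)^2$. Orthonormal frame: $e_1=2y\partial_x-\partial_\theta$, $e_2=2y\partial_y$, $e_3=\partial_\theta$. A surface with unit normal $N$ and mean curvature $H$ (average of principal curvatures w.r.t. $N$) is an $X$-translator if $H=\langle N,X\rangle$. $\mathcal A$-invariant surfaces are those parametrized as $(s,t)\mapsto(x(s),t,\theta(s))$, $t>0$, with regular generating curve $(x(s),\theta(s))$; for them $N=\frac1\Phi(-(x'+2t\theta')e_1+x'e_3)$ and $H=\frac{2t^2}{\Phi^3}(x'\theta''-\theta'x'')$, $\Phi=\sqrt{(x'+2t\theta')^2+x'^2}$. For constants $x_0,\theta_0$: $\Sigma_{x_0}=\{x=x_0\}$, $\Sigma_{\theta_0}=\{\theta=\theta_0\}$.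 *)

(* Defs.v *)
From Stdlib Require Import Reals.
From Coquelicot Require Import Coquelicot.
Open Scope R_scope.

(* Points and tangent vectors of SL(2,R) in the global coordinates (x,y,theta).
   A tangent vector is given by its components (a,b,c) w.r.t. d_x, d_y, d_theta. *)
Definition vec := (R * R * R)%type.
Definition cx (v : vec) : R := fst (fst v).
Definition cy (v : vec) : R := snd (fst v).
Definition ct (v : vec) : R := snd v.

Definition vadd (v w : vec) : vec := (cx v + cx w, cy v + cy w, ct v + ct w).
Definition vscale (r : R) (v : vec) : vec := (r * cx v, r * cy v, r * ct v).

Definition metric (p v w : vec) : R :=
  let y := cy p in
  (cx v * cx w + cy v * cy w) / (4 * y ^ 2)
  + (ct v + cx v / (2 * y)) * (ct w + cx w / (2 * y)).

(* Orthonormal frame e1 = 2y d_x - d_theta, e2 = 2y d_y, e3 = d_theta. *)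
Definition e1 (p : vec) : vec := (2 * cy p, 0, -1).
Definition e2 (p : vec) : vec := (0, 2 * cy p, 0).
Definition e3 (p : vec) : vec := (0, 0, 1).

Inductive KillingField := K_dx | K_dtheta | K_dil | K_par.

Definition killing (K : KillingField) (p : vec) : vec :=
  match K with
  | K_dx => (1, 0, 0)
  | K_dtheta => (0, 0, 1)
  | K_dil => (cx p, cy p, 0)
  | K_par => ((cx p ^ 2 - cy p ^ 2) / 2, cx p * cy p, 0)
  end.

(* A-invariant surface (s,t) |-> (x(s), t, theta(s)), t > 0. *)
Definition ptA (x th : R -> R) (s t : R) : vec := (x s, t, th s).

Definition PhiA (x th : R -> R) (s t : R) : R :=
  sqrt ((Derive x s + 2 * t * Derive th s) ^ 2 + (Derive x s) ^ 2).

Definition normalA (x th : R -> R) (s t : R) : vec :=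
  let p := ptA x th s t in
  vscale (/ PhiA x th s t)
    (vadd (vscale (- (Derive x s + 2 * t * Derive th s)) (e1 p))
          (vscale (Derive x s) (e3 p))).

Definition meanCurvA (x th : R -> R) (s t : R) : R :=
  2 * t ^ 2 / (PhiA x th s t) ^ 3
  * (Derive x s * Derive (Derive th) s - Derive th s * Derive (Derive x) s).

Definition inI (a b : Rbar) (s : R) : Prop := Rbar_lt a s /\ Rbar_lt s b.

Definition regular_curve (a b : Rbar) (x th : R -> R) : Prop :=
  forall s, inI a b s ->
    ex_derive x s /\ ex_derive th s /\
    ex_derive (Derive x) s /\ ex_derive (Derive th) s /\
    continuous (Derive (Derive x)) s /\ continuous (Derive (Derive th)) s /\
    (Derive x s <> 0 \/ Derive th s <> 0).

Definition A_translator (K : KillingField) (a b : Rbar) (x th : R -> R) : Prop :=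
  forall s t, inI a b s -> 0 < t ->
    meanCurvA x th s t
    = metric (ptA x th s t) (normalA x th s t) (killing K (ptA x th s t)).

(* Main.v *)
Require Import Defs.
From Stdlib Require Import Reals Lra Psatz Classical.
From Coquelicot Require Import Coquelicot.
Open Scope R_scope.

Lemma keyeq K x th s t : 0 < t -> (Derive x s <> 0 \/ Derive th s <> 0) ->
  meanCurvA x th s t = metric (ptA x th s t) (normalA x th s t) (killing K (ptA x th s t)) ->
  let p := Derive x s in let q := Derive th s in
  let W := Derive x s * Derive (Derive th) s - Derive th s * Derive (Derive x) s in
  let X := x s in
  let S := (p + 2*t*q)^2 + p^2 in
  match K with
  | K_dx => 2*t^2*W + q*S = 0
  | K_dtheta => 2*t^2*W - p*S = 0
  | K_dil => 2*t^2*W + X*q*S = 0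
  | K_par => 4*t^2*W - (t^2 - X^2)*q*S = 0
  end.
Proof.
  intros Ht Hr H p q W X S.
  assert (HS : 0 < S).
  { unfold S; destruct Hr as [Hr|Hr].
    - assert (0 < p^2) by (unfold p; apply pow2_gt_0 in Hr; lra). nra.
    - assert (0 < q^2) by (unfold q; apply pow2_gt_0 in Hr; lra).
      assert (0 < (2*t*q)^2). { replace ((2*t*q)^2) with (4*t^2*q^2) by ring. apply Rmult_lt_0_compat; [nra|lra]. }
      destruct (Req_dec p 0) as [E|E]. rewrite E in *. nra. assert (0< p^2) by (apply pow2_gt_0; auto). nra. }
  unfold meanCurvA, normalA, metric, PhiA, ptA, killing, vscale, vadd, e1, e3, cx, cy, ct in H; simpl in H.
  fold p q in H. fold W in H. fold X in H.
  replace ((p + 2 * t * q) ^ 2 + p ^ 2) with S in H by (unfold S; ring).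
  set (F := sqrt S) in *.
  assert (HF : 0 < F) by (apply sqrt_lt_R0; auto).
  assert (HF2 : F^2 = S) by (unfold F; simpl; rewrite Rmult_1_r; apply sqrt_sqrt; lra).
  assert (EF: sqrt ((p + 2 * t * q) * ((p + 2 * t * q) * 1) + p * (p * 1)) = F) by (unfold F, S; f_equal; ring).
  unfold W; rewrite <- HF2.
  destruct K; simpl in H; rewrite EF in H.
  all: apply (f_equal (fun z => z * (8*t*F^3))) in H; field_simplify in H; try lra; try (split; lra).
  all: fold p q; set (A := Derive (Derive th) s) in *; set (B := Derive (Derive x) s) in *.
  all: apply (Rmult_eq_reg_l (8*t)); [|lra].
  all: rewrite Rmult_0_r.
  all: match goal with H : ?l = ?r |- _ => first [transitivity (l - r); [field|lra] | transitivity (2*(l - r)); [field|lra] | transitivity ((l - r)/2); [field|lra]] end.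
  all: try lra.
Qed.

Lemma quart (c0 c1 c2 c3 c4 : R) :
  (forall t, 0 < t -> c0 + c1*t + c2*(t*t) + c3*(t*t*t) + c4*(t*t*t*t) = 0) ->
  c0 = 0 /\ c1 = 0 /\ c2 = 0 /\ c3 = 0 /\ c4 = 0.
Proof.
  intros H.
  pose proof (H 1 ltac:(lra)); pose proof (H 2 ltac:(lra)); pose proof (H 3 ltac:(lra));
  pose proof (H 4 ltac:(lra)); pose proof (H 5 ltac:(lra)).
  repeat split; lra.
Qed.

Lemma pow_zero (q : R) n : q ^ n = 0 -> q = 0.
Proof. intros H. destruct (Req_dec q 0); auto. exfalso; exact (pow_nonzero q n H0 H). Qed.

Section G.
Variables (a b : Rbar).

Lemma inI_conv u v w : inI a b u -> inI a b v -> u <= w <= v -> inI a b w.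
Proof.
  unfold inI; destruct a, b; simpl; intros; lra.
Qed.

Lemma inI_loc s : inI a b s -> locally s (inI a b).
Proof.
  intros [H1 H2].
  pose proof (open_Rbar_gt' (Finite s) a H1) as L1.
  pose proof (open_Rbar_lt' (Finite s) b H2) as L2.
  exact (filter_and _ _ L1 L2).
Qed.

Lemma deriv_zero (g : R -> R) s l : inI a b s -> (forall u, inI a b u -> g u = 0) ->
  is_derive g s l -> l = 0.
Proof.
  intros Hs Hg Hd.
  rewrite <- (is_derive_unique _ _ _ Hd).
  rewrite (Derive_ext_loc g (fun _ => 0)). apply Derive_const.
  generalize (inI_loc s Hs); apply filter_imp; intros u Hu; auto.
Qed.

Lemma const_of_deriv (f : R -> R) : (forall u, inI a b u -> is_derive f u 0) ->
  exists c, forall u, inI a b u -> f u = c.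
Proof.
  intros H. destruct (classic (exists s0, inI a b s0)) as [[s0 Hs0]|Hn].
  - exists (f s0). intros u Hu.
    destruct (Rtotal_order u s0) as [Hl|[He|Hg]].
    + apply eq_is_derive; auto. intros t Ht. apply H. apply (inI_conv u s0); auto.
    + subst; auto.
    + symmetry. apply eq_is_derive; auto. intros t Ht. apply H. apply (inI_conv s0 u); auto; try lra.
  - exists 0. intros u Hu. exfalso. apply Hn. eauto.
Qed.

Lemma sign_const (f : R -> R) : (forall u, inI a b u -> continuity_pt f u) ->
  (forall u, inI a b u -> f u <> 0) ->
  forall u v, inI a b u -> inI a b v -> 0 < f u -> 0 < f v.
Proof.
  intros Hc Hn u v Hu Hv Hfu.
  destruct (Rtotal_order (f v) 0) as [Hl|[He|Hg]]; auto.
  - exfalso. destruct (Rtotal_order u v) as [Huv|[Huv|Huv]].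
    + assert (Hc' : forall w, u <= w <= v -> continuity_pt (fun w => - f w) w).
      { intros w Hw. apply continuity_pt_opp. apply Hc. apply (inI_conv u v); auto. }
      destruct (Ranalysis5.IVT_interv (fun w => - f w) u v Hc' Huv ltac:(lra) ltac:(lra)) as [z [Hz1 Hz2]].
      assert (Hz : inI a b z) by (apply (inI_conv u v); auto).
      apply (Hn z Hz). lra.
    + subst; lra.
    + assert (Hc' : forall w, v <= w <= u -> continuity_pt f w).
      { intros w Hw. apply Hc. apply (inI_conv v u); auto. }
      destruct (Ranalysis5.IVT_interv f v u Hc' Huv Hl Hfu) as [z [Hz1 Hz2]].
      assert (Hz : inI a b z) by (apply (inI_conv v u); auto).
      apply (Hn z Hz). lra.
  - exfalso; apply (Hn v); auto.
Qed.
End G.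

Theorem mainTheorem7 (K : KillingField) (a b : Rbar) (x th : R -> R) :
  Rbar_lt a b ->
  regular_curve a b x th ->
  A_translator K a b x th ->
  (exists x0 : R, forall s, inI a b s -> x s = x0) \/
  (exists th0 : R, forall s, inI a b s -> th s = th0).
Proof.
  intros Hab Hreg Htr.
  assert (Cth : (forall u, inI a b u -> Derive th u = 0) -> exists th0 : R, forall s, inI a b s -> th s = th0).
  { intros H0. apply const_of_deriv. intros u Hu. destruct (Hreg u Hu) as (Hx & Hth & _).
    rewrite <- (H0 u Hu). apply Derive_correct; auto. }
  assert (Cx : (forall u, inI a b u -> Derive x u = 0) -> exists x0 : R, forall s, inI a b s -> x s = x0).
  { intros H0. apply const_of_deriv. intros u Hu. destruct (Hreg u Hu) as (Hx & Hth & _).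
    rewrite <- (H0 u Hu). apply Derive_correct; auto. }
  destruct K.
  -
    right. apply Cth.
    assert (P : forall s, inI a b s -> Derive x s * Derive th s = 0 /\
       Derive x s * Derive (Derive th) s - Derive th s * Derive (Derive x) s = -2 * Derive th s ^ 3).
    { intros s Hs. destruct (Hreg s Hs) as (Hx & Hth & Hx' & Hth' & _ & _ & Hr).
      set (p := Derive x s) in *. set (q := Derive th s) in *.
      set (W := p * Derive (Derive th) s - q * Derive (Derive x) s).
      destruct (quart (2*q*p^2) (4*p*q^2) (2*W+4*q^3) 0 0) as (C0 & C1 & C2 & _).
      { intros t Ht. pose proof (keyeq K_dx x th s t Ht Hr (Htr s t Hs Ht)) as E. simpl in E.
        fold p q in E. etransitivity; [|exact E]. unfold W. ring. }
      split. nra. unfold W in *. nra. }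
    intros s Hs. destruct (Hreg s Hs) as (Hx & Hth & Hx' & Hth' & _ & _ & Hr).
    assert (D : is_derive (fun u => Derive x u * Derive th u) s
       (Derive (Derive x) s * Derive th s + Derive x s * Derive (Derive th) s)).
    { apply (is_derive_mult (Derive x) (Derive th)); try apply Derive_correct; auto. exact Rmult_comm. }
    pose proof (deriv_zero a b _ s _ Hs (fun u Hu => proj1 (P u Hu)) D) as D0.
    destruct (P s Hs) as [P1 P2].
    assert (Derive th s * (-2 * Derive th s ^ 3) = 0).
    { rewrite <- P2. 
      transitivity (Derive (Derive th) s * (Derive x s * Derive th s) * 2
         - Derive th s * (Derive (Derive x) s * Derive th s + Derive x s * Derive (Derive th) s)); [ring|].
      rewrite P1, D0. ring. }
    destruct (Req_dec (Derive th s) 0) as [Z|Z]; auto. exfalso.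
    apply (pow_nonzero _ 4 Z). set (q := Derive th s) in *. 
    assert (E : q ^ 4 = -(1/2) * (q * (-2 * q ^ 3))) by field. rewrite E, H. ring.
  -
    left. apply Cx. intros s Hs. destruct (Hreg s Hs) as (Hx & Hth & Hx' & Hth' & _ & _ & Hr).
    set (p := Derive x s) in *. set (q := Derive th s) in *.
    set (W := p * Derive (Derive th) s - q * Derive (Derive x) s).
    destruct (quart (-2*p^3) (-4*p^2*q) (2*W-4*p*q^2) 0 0) as (C0 & C1 & C2 & _).
    { intros t Ht. pose proof (keyeq K_dtheta x th s t Ht Hr (Htr s t Hs Ht)) as E. simpl in E.
      fold p q in E. etransitivity; [|exact E]. unfold W. ring. }
    apply (pow_zero _ 3). lra.
  -
    assert (P : forall s, inI a b s -> x s * Derive x s * Derive th s = 0 /\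
       Derive x s * Derive (Derive th) s - Derive th s * Derive (Derive x) s = -2 * x s * Derive th s ^ 3).
    { intros s Hs. destruct (Hreg s Hs) as (Hx & Hth & Hx' & Hth' & _ & _ & Hr).
      set (p := Derive x s) in *. set (q := Derive th s) in *. set (X := x s).
      set (W := p * Derive (Derive th) s - q * Derive (Derive x) s).
      destruct (quart (2*X*q*p^2) (4*X*p*q^2) (2*W+4*X*q^3) 0 0) as (C0 & C1 & C2 & _).
      { intros t Ht. pose proof (keyeq K_dil x th s t Ht Hr (Htr s t Hs Ht)) as E. simpl in E.
        fold p q X in E. etransitivity; [|exact E]. unfold W. ring. }
      split.
      - apply (pow_zero _ 2). replace ((X*p*q)^2) with (X*p*(4*X*p*q^2)/4) by field. rewrite C1. field.
      - unfold W in *. lra. }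
    assert (Q : forall s, inI a b s -> Derive x s * Derive th s = 0 /\ x s * Derive th s = 0).
    { intros s Hs. destruct (Hreg s Hs) as (Hx & Hth & Hx' & Hth' & _ & _ & Hr).
      assert (D : is_derive (fun u => x u * Derive x u * Derive th u) s
         ((Derive x s * Derive x s + x s * Derive (Derive x) s) * Derive th s + x s * Derive x s * Derive (Derive th) s)).
      { apply (is_derive_mult (fun u => x u * Derive x u) (Derive th)); try apply Derive_correct; auto.
        apply (is_derive_mult x (Derive x)); try apply Derive_correct; auto. exact Rmult_comm. exact Rmult_comm. }
      pose proof (deriv_zero a b _ s _ Hs (fun u Hu => proj1 (P u Hu)) D) as D0.
      destruct (P s Hs) as [P1 P2].
      set (p := Derive x s) in *. set (q := Derive th s) in *. set (X := x s) in *.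
      set (A := Derive (Derive th) s) in *. set (B := Derive (Derive x) s) in *.
      assert (E : (p*q)^2 + 2 * (X*q^2)^2 = 0).
      { transitivity (X*q*(p*A - q*B) + 2*X^2*q^4 + q*((p*p + X*B)*q + X*p*A) - 2*A*(X*p*q)); [ring|].
        rewrite P2, D0, P1. ring. }
      assert (E1 : (p*q)^2 = 0) by (pose proof (pow2_ge_0 (p*q)); pose proof (pow2_ge_0 (X*q^2)); lra).
      assert (E2 : (X*q^2)^2 = 0) by (pose proof (pow2_ge_0 (p*q)); pose proof (pow2_ge_0 (X*q^2)); lra).
      apply pow_zero in E1. apply pow_zero in E2. split; auto.
      apply (pow_zero _ 2). replace ((X*q)^2) with (X*(X*q^2)) by ring. rewrite E2. ring. }
    set (f := fun u => Derive x u * Derive x u - Derive th u * Derive th u).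
    assert (Fc : forall u, inI a b u -> continuity_pt f u).
    { intros u Hu. destruct (Hreg u Hu) as (Hx & Hth & Hx' & Hth' & _).
      assert (Cx' : continuity_pt (Derive x) u) by (apply (proj2 (continuity_pt_filterlim _ _)); exact (ex_derive_continuous (Derive x) u Hx')).
      assert (Ct' : continuity_pt (Derive th) u) by (apply (proj2 (continuity_pt_filterlim _ _)); exact (ex_derive_continuous (Derive th) u Hth')).
      apply (continuity_pt_minus (fun u => Derive x u * Derive x u) (fun u => Derive th u * Derive th u)).
      apply (continuity_pt_mult (Derive x) (Derive x)); auto.
      apply (continuity_pt_mult (Derive th) (Derive th)); auto. }
    assert (Fn : forall u, inI a b u -> f u <> 0).
    { intros u Hu Hf. destruct (Hreg u Hu) as (_ & _ & _ & _ & _ & _ & Hr). destruct (Q u Hu) as [Q1 _].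
      unfold f in Hf. set (p := Derive x u) in *. set (q := Derive th u) in *.
      assert (p ^ 4 = 0) by (replace (p^4) with ((p*p)*(p*p)) by ring; replace (p*p) with (q*q) at 2 by lra;
                              replace (p*p*(q*q)) with ((p*q)*(p*q)) by ring; rewrite Q1; ring).
      apply pow_zero in H. rewrite H in Hf. assert (H0 : q*q = 0) by lra.
      destruct (Rmult_integral _ _ H0); destruct Hr; auto. }
    destruct (classic (exists s0, inI a b s0)) as [[s0 Hs0]|Hn].
    2: { left. exists 0. intros s Hs. exfalso. apply Hn. eauto. }
    destruct (Rtotal_order (f s0) 0) as [Hl|[He|Hg]].
    + left. exists 0. intros s Hs.
      assert (Hfs : 0 < - f s).
      { apply (sign_const a b (fun u => - f u)) with s0; auto.
        intros u Hu. apply continuity_pt_opp. auto.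
        intros u Hu Hf. apply (Fn u Hu). lra. lra. }
      destruct (Q s Hs) as [_ Q2].
      assert (Derive th s <> 0). { intros Z. unfold f in Hfs. rewrite Z in Hfs. nra. }
      destruct (Rmult_integral _ _ Q2); auto. contradiction.
    + exfalso. exact (Fn s0 Hs0 He).
    + right. apply Cth. intros s Hs.
      assert (Hfs : 0 < f s) by (apply (sign_const a b f) with s0; auto).
      destruct (Q s Hs) as [Q1 _].
      assert (Derive x s <> 0). { intros Z. unfold f in Hfs. rewrite Z in Hfs. nra. }
      destruct (Rmult_integral _ _ Q1); auto. contradiction.
  -
    right. apply Cth. intros s Hs. destruct (Hreg s Hs) as (Hx & Hth & Hx' & Hth' & _ & _ & Hr).
    set (p := Derive x s) in *. set (q := Derive th s) in *. set (X := x s).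
    set (W := p * Derive (Derive th) s - q * Derive (Derive x) s).
    destruct (quart (2*X^2*q*p^2) (4*X^2*p*q^2) (4*W - 2*q*p^2 + 4*X^2*q^3) (-4*p*q^2) (-4*q^3)) as (C0 & C1 & C2 & C3 & C4).
    { intros t Ht. pose proof (keyeq K_par x th s t Ht Hr (Htr s t Hs Ht)) as E. simpl in E.
      fold p q X in E. etransitivity; [|exact E]. unfold W. ring. }
    apply (pow_zero _ 3). lra.
Qed.
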